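(* Let $A\in\mathcal{PM}(n)$ have row vectors $r_0,\ldots,r_{n-1}$. A poset vector $v$ of $A$ is join-irreducible if and only if $v=r_i$ for some $i\in X_n$.
   Context: Let $X_n=\{0,1,\ldots,n-1\}$. A naturally labeled (NL) poset on $X_n$ is a partial order $\preceq$ on $X_n$ such that $x\preceq y$ implies $x\le y$ in the usual integer order. Its poset matrix is the $n\times n$ $(0,1)$-matrix $A=(a_{i,j})_{i,j\in X_n}$ with $a_{i,j}=1$ if $j\preceq i$ and $0$ otherwise; $\mathcal{PM}(n)$ is the set of all such matrices. Arithmetic is Boolean ($1+1=1$, vector sum entrywise). For $v\in\{0,1\}^n$, $A^v=\begin{bmatrix}A&\mathbf{0}\\ v&1\end{bmatrix}$, and $v$ is a poset vector of $A$ if $A^v\in\mathcal{PM}(n+1)$. A poset vector $v$ is join-irreducible if $v\neq\mathbf 0$ and, whenever $v=u+w$ with $u,w$ poset vectors of $A$, one has $v=u$ or $v=w$. *)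

(* Defs.v *)
From mathcomp Require Import all_boot.
Set Implicit Arguments. Unset Strict Implicit. Unset Printing Implicit Defensive.

(* (0,1)-matrices on X_n = 'I_n, entries as booleans; A i j = a_{i,j}. *)
Definition bmat (n : nat) := 'I_n -> 'I_n -> bool.
Definition bvec (n : nat) := 'I_n -> bool.

(* A is a poset matrix: the relation  j <=_A i  :<->  A i j  is a partial order
   on X_n which is a natural labeling (j <=_A i implies j <= i). *)
Definition is_poset_matrix (n : nat) (A : bmat n) : Prop :=
  [/\ (forall i, A i i),
      (forall i j, A i j -> A j i -> i = j),
      (forall i j k, A i j -> A j k -> A i k)
    & (forall i j, A i j -> (j <= i)%N)].

(* A^v = [[A, 0], [v, 1]] as an (n+1)x(n+1) matrix; index n is the new last row/col. *)
Definition ext_mat (n : nat) (A : bmat n) (v : bvec n) : bmat n.+1 :=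
  fun i j =>
    match unlift ord_max i, unlift ord_max j with
    | Some i', Some j' => A i' j'
    | Some _, None => false
    | None, Some j' => v j'
    | None, None => true
    end.

Definition poset_vector (n : nat) (A : bmat n) (v : bvec n) : Prop :=
  is_poset_matrix (ext_mat A v).

Definition bvadd (n : nat) (u w : bvec n) : bvec n := fun j => u j || w j.
Definition bvzero (n : nat) : bvec n := fun _ => false.

Definition join_irreducible (n : nat) (A : bmat n) (v : bvec n) : Prop :=
  v <> @bvzero n /\
  forall u w : bvec n, poset_vector A u -> poset_vector A w ->
    v = bvadd u w -> v = u \/ v = w.

Definition row_vec (n : nat) (A : bmat n) (i : 'I_n) : bvec n := fun j => A i j.

(* Main.v *)
Require Import Defs.
From mathcomp Require Import all_boot.
From Stdlib Require Import FunctionalExtensionality.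
Set Implicit Arguments. Unset Strict Implicit.

Lemma ext_ss n (A : bmat n) (v : bvec n) i j : ext_mat A v (lift ord_max i) (lift ord_max j) = A i j.
Proof. by rewrite /ext_mat !liftK. Qed.
Lemma ext_ns n (A : bmat n) (v : bvec n) j : ext_mat A v ord_max (lift ord_max j) = v j.
Proof. by rewrite /ext_mat liftK unlift_none. Qed.

Lemma pv_down n (A : bmat n) (v : bvec n) : poset_vector A v ->
  forall j k, v j -> A j k -> v k.
Proof.
case=> _ _ t _ j k vj ajk.
have := t ord_max (lift ord_max j) (lift ord_max k).
by rewrite !ext_ns ext_ss; apply.
Qed.

Lemma down_pv n (A : bmat n) (v : bvec n) : is_poset_matrix A ->
  (forall j k, v j -> A j k -> v k) -> poset_vector A v.
Proof.
case=> r a t l D; split.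
- by move=> i; rewrite /ext_mat; case: (unlift _ i).
- move=> i j; rewrite /ext_mat.
  case: unliftP => [i' ->|<-]; case: unliftP => [j' ->|<-] //.
  by move=> h1 h2; rewrite (a _ _ h1 h2).
- move=> i j k; rewrite /ext_mat.
  case: unliftP => [i' _|_]; case: unliftP => [j' _|_] //;
    case: unliftP => [k' _|_] //; eauto.
- move=> i j; rewrite /ext_mat.
  case: unliftP => [i' ->|e]; case: unliftP => [j' ->|e2] //; last by move=> _; rewrite e e2.
  + move=> h; rewrite /lift /= /bump !(leqNgt n) !ltn_ord !add0n; exact: l h.
  + by move=> _; rewrite e; exact: leq_ord.
Qed.

Theorem theorem5p5 (n : nat) (A : bmat n) (v : bvec n) :
  is_poset_matrix A -> poset_vector A v ->
  (join_irreducible A v <-> exists i : 'I_n, v = row_vec A i).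
Proof.
move=> PA pv; have D := pv_down pv.
case: (PA) => r a t l.
split.
- case=> nz ji.
  have [i vi imax] : exists2 i, v i & forall j, v j -> (j <= i)%N.
    case: (pickP v) => [j0 vj0|none]; last first.
      by case: nz; apply: functional_extensionality => j; rewrite none.
    exists [arg max_(i > j0 | v i) (i : nat)]; case: arg_maxnP => //.
  pose w : bvec n := fun j => v j && (j != i).
  have pw : poset_vector A w.
    apply: down_pv => // j k /andP[vj nji] ajk; apply/andP; split; first exact: D ajk.
    apply/eqP => eki; move: ajk; rewrite eki => aji.
    have := l _ _ aji; have := imax _ vj => h1 h2.
    by move/eqP: nji; apply; apply: val_inj; apply/eqP; rewrite eqn_leq h1 h2.
  have pu : poset_vector A (row_vec A i).
    by apply: down_pv => // j k; rewrite /row_vec => h1 h2; exact: t h1 h2.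
  have e : v = bvadd (row_vec A i) w.
    apply: functional_extensionality => j; rewrite /bvadd /w /row_vec.
    case: (eqVneq j i) => [->|ne]; first by rewrite vi r.
    rewrite andbT; case vj: (v j); first by rewrite orbT.
    by case aij: (A i j) => //; move: vj; rewrite (D _ _ vi aij).
  case: (ji _ _ pu pw e) => [->|ew]; first by exists i.
  by move: vi; rewrite ew /w eqxx andbF.
- case=> i ->; split.
  + by move/(congr1 (fun f => f i)); rewrite /row_vec /bvzero r.
  + move=> u w pu pw e.
    have : bvadd u w i by rewrite -e /row_vec r.
    have E j : A i j = u j || w j by rewrite [LHS](congr1 (fun f => f j) e).
    case/orP => [ui|wi]; [left|right]; apply: functional_extensionality => j;
      apply/idP/idP.
    * by move=> aij; apply: (pv_down pu ui aij).
    * by move=> uj; rewrite /row_vec E uj.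
    * by move=> aij; apply: (pv_down pw wi aij).
    * by move=> wj; rewrite /row_vec E wj orbT.
Qed.
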